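(* Let $d\geqslant1$, let $u_1,\dots,u_d\in\mathbb{Z}^d$ satisfy no nontrivial $\mathbb{Z}$-linear relation, $\mathcal{L}=\mathbb{Z}u_1+\dots+\mathbb{Z}u_d$, and let $(\mathscr{Q}_1,\mathcal{Q})$ be an ordered pair of two nonempty disjoint subsets of $\mathbb{Z}^d/\mathcal{L}$. Then: (1) $(\mathscr{Q}_1,\mathcal{Q})$ admits a minimal complement if and only if $(\bar v+\mathscr{Q}_1,\bar v+\mathcal{Q})$ admits a minimal complement for every $\bar v\in\mathbb{Z}^d/\mathcal{L}$. (2) If $\mathscr{Q}_1\cup\mathcal{Q}$ is a translate of a subgroup of $\mathbb{Z}^d/\mathcal{L}$, then $(\mathscr{Q}_1,\mathcal{Q})$ admits a minimal complement in $\mathbb{Z}^d/\mathcal{L}$. (3) If every nontrivial element of $\mathbb{Z}^d/\mathcal{L}$ has order two and either (a) each of $\mathscr{Q}_1,\mathcal{Q}$ is a singleton, or (b) the complement of $\mathscr{Q}_1\cup\mathcal{Q}$ in $\mathbb{Z}^d/\mathcal{L}$ is a singleton, then $(\mathscr{Q}_1,\mathcal{Q})$ admits a minimal complement.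
   Context: An ordered pair $(\mathscr{Q}_1,\mathcal{Q})$ of two nonempty disjoint subsets of the finite abelian group $\mathbb{Z}^d/\mathcal{L}$ admits a minimal complement in $\mathbb{Z}^d/\mathcal{L}$ if there is a nonempty $\mathcal{N}\subseteq\mathbb{Z}^d/\mathcal{L}$ with (i) $\mathcal{N}+(\mathcal{Q}\cup\mathscr{Q}_1)=\mathbb{Z}^d/\mathcal{L}$ and (ii) for every $n\in\mathcal{N}$ there is $q\in\mathscr{Q}_1$ with $n+q\neq n'+q'$ for all $n'\in\mathcal{N}\setminus\{n\}$, $q'\in\mathcal{Q}\cup\mathscr{Q}_1$. *)

(* Defs.v *)
(* Z^d is modelled as 'rV[int]_d; the finite group Z^d/L is
   handled through L-periodic subsets of Z^d: a subset S of Z^d/L is encoded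
   by its preimage in Z^d (an L-invariant predicate), and equality in Z^d/L
   is congruence modulo L. *)
From mathcomp Require Import all_boot all_order all_algebra.
Set Implicit Arguments. Unset Strict Implicit. Unset Printing Implicit Defensive.
Import Order.TTheory GRing.Theory Num.Theory.
Local Open Scope ring_scope.

Section Lattice.
Variables (d : nat) (u : 'I_d -> 'rV[int]_d).

Definition Zindep : Prop :=
  forall c : 'I_d -> int, \sum_i c i *: u i = 0 -> forall i, c i = 0.

Definition inL (v : 'rV[int]_d) : Prop :=
  exists c : 'I_d -> int, v = \sum_i c i *: u i.

Definition congL (v w : 'rV[int]_d) : Prop := inL (v - w).

Definition Lperiodic (P : 'rV[int]_d -> Prop) : Prop :=
  forall v w, congL v w -> P v -> P w.

Definition translate (v : 'rV[int]_d) (P : 'rV[int]_d -> Prop) :=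
  fun x => P (x - v).

Definition admits_min_compl (Q1 Q : 'rV[int]_d -> Prop) : Prop :=
  exists N : 'rV[int]_d -> Prop,
    [/\ Lperiodic N, (exists n, N n),
        (forall x, exists n q, [/\ N n, Q1 q \/ Q q & congL x (n + q)]) &
        (forall n, N n -> exists q, Q1 q /\
           forall n' q', N n' -> ~ congL n' n -> Q1 q' \/ Q q' ->
             ~ congL (n + q) (n' + q'))].

Definition Lsubgroup (H : 'rV[int]_d -> Prop) : Prop :=
  [/\ Lperiodic H, H 0 & forall x y, H x -> H y -> H (x - y)].

Definition is_singletonL (P : 'rV[int]_d -> Prop) : Prop :=
  exists a, forall x, P x <-> congL x a.

End Lattice.

(* Main.v *)
Require Import Defs.
From mathcomp Require Import all_boot all_order all_algebra ring.
From Stdlib Require Import Classical ClassicalEpsilon FunctionalExtensionality PropExtensionality.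
Import Order.TTheory GRing.Theory Num.Theory.
Local Open Scope ring_scope.

Set Implicit Arguments.
Ltac mxring := apply/rowP => ?; rewrite !(mxE, mulr2n); ring.

Section Aux.
Variables (d : nat) (u : 'I_d -> 'rV[int]_d).

Lemma inL0 : inL u 0.
Proof. by exists (fun _ => 0); rewrite big1 // => i _; rewrite scale0r. Qed.

Lemma inLD a b : inL u a -> inL u b -> inL u (a + b).
Proof.
move=> [c1 ->] [c2 ->]; exists (fun i => c1 i + c2 i).
rewrite -big_split /=; apply: eq_bigr => i _; by rewrite scalerDl.
Qed.

Lemma inLN a : inL u a -> inL u (- a).
Proof.
move=> [c ->]; exists (fun i => - c i); rewrite -sumrN; apply: eq_bigr => i _.
by rewrite scaleNr.
Qed.

Lemma inLB a b : inL u a -> inL u b -> inL u (a - b).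
Proof. by move=> ha hb; apply: inLD => //; apply: inLN. Qed.

Lemma inL_eq a b : a = b -> inL u a -> inL u b.
Proof. by move->. Qed.

Lemma cL_refl x : congL u x x.
Proof. rewrite /congL subrr; exact: inL0. Qed.

Lemma cL_sym x y : congL u x y -> congL u y x.
Proof. rewrite /congL => /inLN; by rewrite opprB. Qed.

Lemma cL_trans x y z : congL u x y -> congL u y z -> congL u x z.
Proof.
rewrite /congL => h1 h2; apply: (inL_eq _ (inLD h1 h2)); mxring.
Qed.

Lemma admits_ext (Q1 Q Q1' Q' : 'rV[int]_d -> Prop) :
  (forall x, Q1 x <-> Q1' x) -> (forall x, Q x <-> Q' x) ->
  admits_min_compl u Q1 Q -> admits_min_compl u Q1' Q'.
Proof.
move=> e1 e [N [hp hne hc hm]]; exists N; split => //.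
  move=> x; have [n [q [Nn hq cx]]] := hc x; exists n, q; split => //.
  by case: hq => [/e1|/e]; auto.
move=> n Nn; have [q [hq1 hq]] := hm n Nn; exists q; split; first by apply/e1.
move=> n' q' Nn' nc hq'; apply: hq => //.
by case: hq' => [/e1|/e]; auto.
Qed.

Lemma admits_transl (Q1 Q : 'rV[int]_d -> Prop) v :
  admits_min_compl u Q1 Q ->
  admits_min_compl u (translate v Q1) (translate v Q).
Proof.
move=> [N [hp hne hc hm]]; exists N; split => //.
  move=> x; have [n [q [Nn hq cx]]] := hc (x - v); exists n, (q + v); split => //.
    by rewrite /translate addrK.
  by apply: (inL_eq _ cx); mxring.
move=> n Nn; have [q [hq1 hq]] := hm n Nn; exists (q + v); split.
  by rewrite /translate addrK.
move=> n' q' Nn' nc hq' cc; apply: (hq n' (q' - v) Nn' nc hq').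
by apply: (inL_eq _ cc); mxring.
Qed.

Lemma part2 (Q1 Q : 'rV[int]_d -> Prop) :
  (exists x, Q1 x) ->
  (exists (v : 'rV[int]_d) (H : 'rV[int]_d -> Prop),
          Lsubgroup u H /\ forall x, (Q1 x \/ Q x) <-> H (x - v)) ->
  admits_min_compl u Q1 Q.
Proof.
move=> [q0 Hq0] [v [H [[Hp H0 HB] HQ]]].
have HN y : H y -> H (- y) by move=> hy; rewrite -sub0r; apply: HB.
have HD x y : H x -> H y -> H (x + y).
  by move=> hx hy; rewrite -[y]opprK; apply: HB => //; apply: HN.
have HL x : inL u x -> H x.
  by move=> hx; apply: (Hp 0) => //; apply: (inL_eq _ (inLN hx)); mxring.
pose r x := epsilon (inhabits (0 : 'rV[int]_d)) (fun y => H (y - x)).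
have rS x : H (r x - x).
  by apply: (epsilon_spec (inhabits 0) (fun y => H (y - x))); exists x; rewrite subrr.
have rE x x' : H (x - x') -> r x = r x'.
  move=> hx; rewrite /r; f_equal; apply: functional_extensionality => y.
  apply: propositional_extensionality; split => h.
    by have := HD _ _ h hx; rewrite addrA subrK.
  by have := HD _ _ h (HN _ hx); rewrite opprB addrA subrK.
pose N y := congL u y (r y).
exists N; split.
- move=> x y cxy Nx; rewrite /N.
  have -> : r y = r x by apply: rE; apply: HL; apply: cL_sym.
  exact: cL_trans (cL_sym cxy) Nx.
- exists (r 0); rewrite /N (rE (r 0) 0); first exact: cL_refl.
  by rewrite subr0 -[r 0]subr0; apply: rS.
- move=> x; exists (r (x - v)), (x - r (x - v)); split.
  + rewrite /N (rE (r (x - v)) (x - v)); [exact: cL_refl | exact: rS].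
  + apply/HQ; have := HN _ (rS (x - v)).
    by have -> : - (r (x - v) - (x - v)) = x - r (x - v) - v by mxring.
  + by rewrite addrC subrK; apply: cL_refl.
- move=> n Nn; exists q0; split => // n' q' Nn' nc hq' cc; apply: nc.
  have h1 : H (q0 - v) by apply/HQ; left.
  have h2 : H (q' - v) by apply/HQ.
  have h3 : H (n - n').
    have := HB _ _ (HL _ cc) (HB _ _ h1 h2).
    by have -> : n + q0 - (n' + q') - (q0 - v - (q' - v)) = n - n' by mxring.
  have e : r n = r n' by apply: rE.
  apply: cL_trans Nn' _; rewrite -e; exact: cL_sym.
Qed.
End Aux.

Section Aux3.
Variables (d : nat) (u : 'I_d -> 'rV[int]_d).

Lemma tors2 (h2 : forall x, ~ inL u x -> inL u (x *+ 2)) x : inL u (x *+ 2).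
Proof.
case: (classic (inL u x)) => hx; last exact: h2.
by rewrite mulr2n; apply: inLD.
Qed.

Lemma part3a (Q1 Q : 'rV[int]_d -> Prop) :
  (forall x, ~ inL u x -> inL u (x *+ 2)) ->
  is_singletonL u Q1 -> is_singletonL u Q -> admits_min_compl u Q1 Q.
Proof.
move=> h2 [a ha] [b hb].
have hq1 : exists x, Q1 x by exists a; apply/ha; apply: cL_refl.
apply: part2 => //; exists a, (fun y => congL u y 0 \/ congL u y (b - a)).
split; first split.
- move=> x y cxy [h|h]; [left|right]; exact: cL_trans (cL_sym cxy) h.
- by left; apply: cL_refl.
- move=> x y [hx|hx] [hy|hy]; rewrite /congL in hx hy *.
  + by left; apply: (inL_eq _ (inLB hx hy)); mxring.
  + right; apply: (inL_eq _ (inLD (inLB hx hy) (tors2 h2 (a - b)))); mxring.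
  + by right; apply: (inL_eq _ (inLB hx hy)); mxring.
  + by left; apply: (inL_eq _ (inLB hx hy)); mxring.
- move=> x; split.
  + case=> [/ha|/hb] h; [left|right]; rewrite /congL in h *;
      by apply: (inL_eq _ h); mxring.
  + case=> h; [left; apply/ha|right; apply/hb]; rewrite /congL in h *;
      by apply: (inL_eq _ h); mxring.
Qed.

Lemma part3b (Q1 Q : 'rV[int]_d -> Prop) :
  (forall x, ~ inL u x -> inL u (x *+ 2)) ->
  Lperiodic u Q1 -> (exists x, Q1 x) ->
  is_singletonL u (fun x => ~ (Q1 x \/ Q x)) -> admits_min_compl u Q1 Q.
Proof.
move=> h2 hp1 [q0 Hq0] [c hc].
pose t := q0 - c.
have D : inL u ((q0 - c) *+ 2) by apply: tors2.
have hq : forall x, ~ congL u x c -> Q1 x \/ Q x.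
  move=> x nx; case: (classic (Q1 x \/ Q x)) => // h; case: nx; exact/hc.
exists (fun x => congL u x 0 \/ congL u x t); split.
- move=> x y cxy [h|h]; [left|right]; exact: cL_trans (cL_sym cxy) h.
- by exists 0; left; apply: cL_refl.
- move=> x; case: (classic (congL u x c)) => hx.
    exists t, (x - t); split; first by right; apply: cL_refl.
      left; apply: (hp1 q0) => //; rewrite /congL in hx *.
      apply: (inL_eq _ (inLB D hx)); rewrite /t; mxring.
    by rewrite addrC subrK; apply: cL_refl.
  exists 0, x; split; [by left; apply: cL_refl | exact: hq |].
  by rewrite add0r; apply: cL_refl.
- move=> n [Nn|Nn]; exists q0; split => // n' q' [Nn'|Nn'] nc hq' cc.
  + by apply: nc; exact: cL_trans Nn' (cL_sym Nn).
  + have : congL u q' c.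
      rewrite /congL in Nn Nn' cc *.
      apply: (inL_eq _ (inLB (inLB Nn cc) Nn')); rewrite /t; mxring.
    by move/hc; apply.
  + have : congL u q' c.
      rewrite /congL in Nn Nn' cc *.
      apply: (inL_eq _ (inLD (inLB (inLB Nn cc) Nn') D)); rewrite /t; mxring.
    by move/hc; apply.
  + by apply: nc; exact: cL_trans Nn' (cL_sym Nn).
Qed.
End Aux3.

Unset Implicit Arguments.

Theorem lemma4p20 (d : nat) (u : 'I_d -> 'rV[int]_d) (Q1 Q : 'rV[int]_d -> Prop) :
  (1 <= d)%N -> Zindep u ->
  Lperiodic u Q1 -> Lperiodic u Q ->
  (exists x, Q1 x) -> (exists x, Q x) ->
  (forall x, Q1 x -> Q x -> False) ->
  [/\ (admits_min_compl u Q1 Q <->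
        forall v, admits_min_compl u (translate v Q1) (translate v Q)),
      ((exists (v : 'rV[int]_d) (H : 'rV[int]_d -> Prop),
          Lsubgroup u H /\ forall x, (Q1 x \/ Q x) <-> H (x - v)) ->
        admits_min_compl u Q1 Q) &
      ((forall x, ~ inL u x -> inL u (x *+ 2)) ->
       ((is_singletonL u Q1 /\ is_singletonL u Q) \/
        is_singletonL u (fun x => ~ (Q1 x \/ Q x))) ->
       admits_min_compl u Q1 Q)].
Proof.
move=> _ _ hp1 hp hq1 hq hdis; split.
- split; first by move=> h v; apply: admits_transl.
  move=> /(_ 0) h; apply: admits_ext h => x; by rewrite /translate subr0.
- exact: part2.
- move=> h2 [[a b]|s]; first exact: part3a.
  exact: part3b.
Qed.
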